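(* Let $\mathrm{R}$ be a real closed field, $P,Q,R,S\in\mathrm{R}[X]$ with $P,Q$ not both $0$ and $R,S$ not both $0$, and $a,b\in\mathrm{R}$ with $a<b$. If neither $a$ nor $b$ is a bad number for $P,Q,R,S$, then $$\mathrm{Ind}_a^b(PR-QS,\,PS+QR)=\mathrm{Ind}_a^b(P,Q)+\mathrm{Ind}_a^b(R,S)-\mathrm{Var}_a^b(PS+QR,\,QS).$$
   Context: For nonzero $P\in\mathrm{R}[X]$ and $x\in\mathrm{R}$ write uniquely $P=(X-x)^{\mathrm{mult}_x(P)}P_x$ with $P_x(x)\neq0$. For $P\ne0$, $Q\neq0$ set $\mathrm{val}_x(P/Q)=\mathrm{mult}_x(P)-\mathrm{mult}_x(Q)$, and $\mathrm{val}_x(0/Q)=+\infty$. $\mathrm{Sign}(P,Q,x)=\mathrm{sign}(P_x(x)Q_x(x))$ if $P\ne0$, $Q\ne0$ and $\mathrm{val}_x(P/Q)=0$, and $0$ otherwise. $\mathrm{Var}_a^b(P,Q)=-\tfrac12\mathrm{Sign}(P,Q,a)+\tfrac12\mathrm{Sign}(P,Q,b)$. $\mathrm{Ind}^+_x(P,Q)=\tfrac12\,\mathrm{sign}(P_x(x)Q_x(x))$ and $\mathrm{Ind}^-_x(P,Q)=\tfrac12(-1)^{\mathrm{val}_x(P/Q)}\mathrm{sign}(P_x(x)Q_x(x))$ if $P\ne0$, $Q\neq0$ and $\mathrm{val}_x(P/Q)<0$, both $0$ otherwise; $\mathrm{Ind}_x=\mathrm{Ind}^+_x-\mathrm{Ind}^-_x$;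 for $a<b$, $\mathrm{Ind}_a^b(P,Q)=\mathrm{Ind}_a^+(P,Q)+\sum_{x\in(a,b)}\mathrm{Ind}_x(P,Q)-\mathrm{Ind}_b^-(P,Q)$. A number $c\in\mathrm{R}$ is a bad number for $P,Q,R,S$ if $Q\ne0$, $S\neq0$, $\mathrm{val}_c(P/Q)=\mathrm{val}_c(R/S)<0$ and $\mathrm{val}_c((PS+QR)/(QS))=0$. *)

(* Defs.v *)
From mathcomp Require Import all_boot all_order all_algebra.
From mathcomp Require Import polyrcf.
Set Implicit Arguments. Unset Strict Implicit. Unset Printing Implicit Defensive.
Import Order.TTheory GRing.Theory Num.Theory.
Local Open Scope ring_scope.

Section Defs.
Variable F : rcfType.
Implicit Types (P Q R S : {poly F}) (x a b c : F).

(* mult_x(P): multiplicity of x as a root of P (meaningful for P != 0). *)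
Definition mult x P : nat := mup x P.

Definition cofac x P : {poly F} := P %/ (('X - x%:P) ^+ mult x P).

(* val_x(P/Q) for Q != 0; None encodes +oo (the case P = 0). *)
Definition val x P Q : option int :=
  if P == 0 then None else Some ((mult x P)%:Z - (mult x Q)%:Z).

Definition Sign P Q x : F :=
  if [&& P != 0, Q != 0 & val x P Q == Some 0]
  then Num.sg ((cofac x P).[x] * (cofac x Q).[x]) else 0.

Definition Var a b P Q : F :=
  - (2%:R^-1) * Sign P Q a + 2%:R^-1 * Sign P Q b.

Definition val_neg x P Q : bool :=
  if val x P Q is Some v then (v < 0) else false.

Definition Indp x P Q : F :=
  if (P != 0) && (Q != 0) && val_neg x P Q
  then 2%:R^-1 * Num.sg ((cofac x P).[x] * (cofac x Q).[x]) else 0.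

Definition Indm x P Q : F :=
  if (P != 0) && (Q != 0) && val_neg x P Q
  then 2%:R^-1 * ((-1) ^ ((mult x P)%:Z - (mult x Q)%:Z))
       * Num.sg ((cofac x P).[x] * (cofac x Q).[x]) else 0.

Definition Indx x P Q : F := Indp x P Q - Indm x P Q.

(* Ind_x(P,Q) can only be nonzero when Q != 0 and Q(x) = 0, so the
   (finitely supported) sum over (a,b) is taken over the roots of Q
   in the open interval ]a,b[ ([roots Q a b], the sorted uniq list of
   them; empty when Q = 0). *)
Definition IndI a b P Q : F :=
  Indp a P Q + \sum_(x <- roots Q a b) Indx x P Q - Indm b P Q.

Definition bad c P Q R S : Prop :=
  Q != 0 /\ S != 0 /\
  (exists v : int, [/\ val c P Q = Some v, val c R S = Some v & v < 0]) /\
  val c (P * S + Q * R) (Q * S) = Some 0.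

End Defs.

(* Main.v *)
Require Import Defs.
From mathcomp Require Import all_boot all_order all_algebra.
From mathcomp Require Import polyrcf.
From mathcomp Require Import qe_rcf_th polyorder zify ring lra.
Set Implicit Arguments. Unset Strict Implicit. Unset Printing Implicit Defensive.
Import Order.TTheory GRing.Theory Num.Theory.
Local Open Scope ring_scope.

Definition sgn (b : bool) : int := if b then -1 else 1.

Section Germ.
Variable F : rcfType.
Variable mu : {poly F} -> nat.
Variable sb : {poly F} -> bool.
Hypothesis muM : forall A B, A != 0 -> B != 0 -> mu (A*B) = (mu A + mu B)%N.
Hypothesis sbM : forall A B, A != 0 -> B != 0 -> sb (A*B) = sb A (+) sb B.
Hypothesis muN : forall A, mu (-A) = mu A.
Hypothesis sbN : forall A, A != 0 -> sb (-A) = ~~ sb A.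
Hypothesis add1 : forall A B, A != 0 -> B != 0 -> (mu A < mu B)%N ->
  [/\ A + B != 0, mu (A+B) = mu A & sb (A+B) = sb A].
Hypothesis add2 : forall A B, A != 0 -> B != 0 -> mu A = mu B -> sb A = sb B ->
  [/\ A + B != 0, mu (A+B) = mu A & sb (A+B) = sb A].
Hypothesis add0 : forall A B, A != 0 -> B != 0 -> A + B != 0 ->
  (minn (mu A) (mu B) <= mu (A+B))%N.

Definition Ia A B : int := if [&& A != 0, B != 0 & (mu A < mu B)%N]
  then sgn (sb A (+) sb B) else 0.
Definition Ta A B : int := if (A != 0) && (B != 0) then sgn (sb A (+) sb B) else 0.
Definition Sa A B : int := if [&& A != 0, B != 0 & mu A == mu B]
  then sgn (sb A (+) sb B) else 0.
Definition badA P Q R S :=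
  [&& [&& P != 0, Q != 0, R != 0 & S != 0], (mu P < mu Q)%N,
      (mu P + mu S == mu R + mu Q)%N, P*S+Q*R != 0 &
      mu (P*S+Q*R) == (mu Q + mu S)%N].

Variant add_spec A B : Prop :=
 | AddL of (mu A < mu B)%N & A + B != 0 & mu (A+B) = mu A & sb (A+B) = sb A
 | AddR of (mu B < mu A)%N & A + B != 0 & mu (A+B) = mu B & sb (A+B) = sb B
 | AddE of mu A = mu B & sb A = sb B & A + B != 0 & mu (A+B) = mu A & sb (A+B) = sb A
 | AddC of mu A = mu B & sb A = ~~ sb B & A + B != 0 & (mu A <= mu (A+B))%N
 | Add0 of mu A = mu B & sb A = ~~ sb B & A + B = 0.

Lemma add_cases A B : A != 0 -> B != 0 -> add_spec A B.
Proof.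
move=> nA nB; case: (ltngtP (mu A) (mu B)) => h.
- by case: (add1 nA nB h) => *; apply: AddL.
- by case: (add1 nB nA h); rewrite addrC => *; apply: AddR.
have [e|e] := eqVneq (sb A) (sb B).
  by case: (add2 nA nB h e) => *; apply: AddE.
have e' : sb A = ~~ sb B by move: e; case: (sb A); case: (sb B).
have [z|nz] := eqVneq (A + B) 0; first by exact: Add0.
apply: AddC => //; move: (add0 nA nB nz); rewrite -h minnn //.
Qed.

Lemma Ia_mull P R S : P != 0 -> Ia (P * R) (P * S) = Ia R S.
Proof.
move=> nP; rewrite /Ia.
have [->|nR] := eqVneq R 0; first by rewrite mulr0 eqxx.
have [->|nS] := eqVneq S 0; first by rewrite mulr0 eqxx /= andbF.
rewrite !mulf_neq0 // !muM // ltn_add2l !sbM //.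
by case: (sb P); case: (sb R); case: (sb S).
Qed.

Lemma Ia_mulr P Q R : R != 0 -> Ia (P * R) (Q * R) = Ia P Q.
Proof. by move=> nR; rewrite ![_ * R]mulrC Ia_mull. Qed.

Lemma Ia0 A : Ia A 0 = 0.
Proof. by rewrite /Ia eqxx andbF. Qed.
Lemma Ia0l A : Ia 0 A = 0.
Proof. by rewrite /Ia eqxx. Qed.
Lemma Ta0 A : Ta A 0 = 0.
Proof. by rewrite /Ta eqxx andbF. Qed.
Lemma Sa0 A : Sa A 0 = 0.
Proof. by rewrite /Sa eqxx andbF. Qed.

Lemma local_main P Q R S N M : P != 0 -> Q != 0 -> R != 0 -> S != 0 ->
  N = P * S + Q * R -> M = P * R - Q * S ->
  Ia M N = Ia P Q + Ia R S - Ta N (Q * S) +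
  (if badA P Q R S then 0 else Sa N (Q * S)).
Proof.
move=> nP nQ nR nS eN eM.
move eP : (sb P) => bP; move eQ : (sb Q) => bQ.
move eR : (sb R) => bR; move eS : (sb S) => bS.
have nPS : P * S != 0 by rewrite mulf_neq0.
have nQR : Q * R != 0 by rewrite mulf_neq0.
have nPR : P * R != 0 by rewrite mulf_neq0.
have nD : Q * S != 0 by rewrite mulf_neq0.
have nmD : - (Q * S) != 0 by rewrite oppr_eq0.
have muD : mu (Q * S) = (mu Q + mu S)%N by rewrite muM.
have sbD : sb (Q * S) = bQ (+) bS by rewrite sbM // eQ eS.
rewrite /badA -eN.
case: (add_cases nPS nQR); rewrite -eN !muM // !sbM // ?eP ?eQ ?eR ?eS => *;
case: (add_cases nPR nmD); rewrite -eM ?muN ?sbN // !muM // !sbM // ?eP ?eQ ?eR ?eS => *;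
rewrite /Ia /Ta /Sa;
repeat match goal with
  | H : N = 0 |- _ => rewrite H
  | H : M = 0 |- _ => rewrite H
  | H : is_true (N != 0) |- _ => rewrite H
  | H : is_true (M != 0) |- _ => rewrite H
  | H : mu N = _ |- _ => rewrite H
  | H : mu M = _ |- _ => rewrite H
  | H : sb N = _ |- _ => rewrite H
  | H : sb M = _ |- _ => rewrite H
  end;
rewrite ?eqxx ?nP ?nQ ?nR ?nS ?nD muD sbD ?eP ?eQ ?eR ?eS /=;
clear eP eQ eR eS;
repeat (case: ifP => ? /=);
try (exfalso; repeat match goal with H : is_true (_ != 0) |- _ => clear H
  | H : sb _ = _ |- _ => clear H
  | H : _ = 0%R |- _ => clear H
  | H : @eq {poly F} _ _ |- _ => clear H
  | H : @eq bool _ ?y |- _ => assert_fails (constr_eq y true);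
        assert_fails (constr_eq y false); clear H end;
  clear muM sbM muN sbN add1 add2 add0; lia);
try (case: (sb N));
try (case: (sb M));
destruct bP; destruct bQ; destruct bR; destruct bS;
repeat match goal with H : @eq bool _ _ |- _ => move: H end; rewrite /=;
intros; first [discriminate | exact: erefl | (vm_compute; reflexivity)].
Qed.

Lemma Ta0l A : Ta 0 A = 0.
Proof. by rewrite /Ta eqxx. Qed.
Lemma Sa0l A : Sa 0 A = 0.
Proof. by rewrite /Sa eqxx. Qed.

Lemma local_P0 Q R S : Q != 0 -> R != 0 -> S != 0 ->
  Ia (- (Q * S)) (Q * R) = Ia R S - Ta (Q * R) (Q * S) + Sa (Q * R) (Q * S).
Proof.
move=> nQ nR nS; rewrite /Ia /Ta /Sa oppr_eq0 !mulf_neq0 // muN sbN ?mulf_neq0 //.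
rewrite !muM // !sbM // ltn_add2l eqn_add2l nR nS /=.
case: (ltngtP (mu R) (mu S)) => h; rewrite ?eqxx /=;
case: (sb Q); case: (sb R); case: (sb S); rewrite /=;
  first [done | exact: erefl | (vm_compute; reflexivity)].
Qed.

Lemma local_R0 P Q S : P != 0 -> Q != 0 -> S != 0 ->
  Ia (- (Q * S)) (P * S) = Ia P Q - Ta (P * S) (Q * S) + Sa (P * S) (Q * S).
Proof.
move=> nP nQ nS; rewrite /Ia /Ta /Sa oppr_eq0 !mulf_neq0 // muN sbN ?mulf_neq0 //.
rewrite !muM // !sbM // ltn_add2r eqn_add2r nP nQ /=.
case: (ltngtP (mu P) (mu Q)) => h; rewrite ?eqxx /=;
case: (sb Q); case: (sb P); case: (sb S); rewrite /=;
  first [done | exact: erefl | (vm_compute; reflexivity)].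
Qed.

Lemma local P Q R S : ~~ ((P == 0) && (Q == 0)) -> ~~ ((R == 0) && (S == 0)) ->
  Ia (P * R - Q * S) (P * S + Q * R) = Ia P Q + Ia R S - Ta (P * S + Q * R) (Q * S) +
  (if badA P Q R S then 0 else Sa (P * S + Q * R) (Q * S)).
Proof.
move=> hPQ hRS.
have [eQ|nQ] := eqVneq Q 0.
  rewrite eQ in hPQ *; rewrite eqxx andbT in hPQ.
  rewrite !mul0r subr0 addr0 Ia_mull // Ia0 Ta0 Sa0 /badA eqxx /=.
  by (try case: ifP => _); rewrite ?(addr0, subr0, add0r, sub0r, oppr0).
have [eS|nS] := eqVneq S 0.
  rewrite eS in hRS *; rewrite eqxx andbT in hRS.
  rewrite !mulr0 subr0 add0r Ia_mulr // Ia0 Ta0 Sa0 /badA eqxx /= !andbF.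
  by (try case: ifP => _); rewrite ?(addr0, subr0, add0r, sub0r, oppr0).
have [eP|nP] := eqVneq P 0.
  have [eR|nR] := eqVneq R 0.
    rewrite eP eR !(mul0r, mulr0, add0r) Ia0 Ta0l Sa0l !Ia0l.
    by (try case: ifP => _); rewrite ?(addr0, subr0, add0r, sub0r, oppr0).
  rewrite eP !(mul0r, add0r) Ia0l add0r local_P0 //.
  by rewrite /badA eqxx /=.
have [eR|nR] := eqVneq R 0.
  rewrite eR !(mulr0, add0r, addr0) Ia0l addr0 local_R0 //.
  by rewrite /badA eqxx /= ?andbF /=.
exact: local_main.
Qed.

End Germ.


Section Conc.
Variable F : rcfType.
Implicit Types (A B P Q R S : {poly F}) (x : F).

Lemma mu_mup x A : A != 0 -> \mu_x A = mup x A.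
Proof.
move=> nA; case: (mu_spec x nA) => q nq {2}->.
by rewrite mupMr // mup_XsubCX eqxx.
Qed.

Lemma sgp_right_XsubCn x n : sgp_right (('X - x%:P) ^+ n) x = 1.
Proof.
elim: n => [|n IH]; first by rewrite expr0 sgp_rightc sgr1.
rewrite exprS sgp_right_mul IH mulr1 sgp_right_rec polyXsubC_eq0 /=.
rewrite root_XsubC eqxx /= derivXsubC sgp_rightc sgr1 //.
Qed.

Lemma mu_dec x A : A != 0 ->
  exists2 q, ~~ root q x & A = q * ('X - x%:P) ^+ (\mu_x A).
Proof. by move=> nA; case: (mu_spec x nA) => q nq eA; exists q. Qed.

Lemma sgp_right_dec x A q n : ~~ root q x -> A = q * ('X - x%:P) ^+ n ->
  sgp_right A x = Num.sg q.[x].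
Proof. by move=> nq ->; rewrite sgp_right_mul sgp_right_XsubCn mulr1 sgp_rightNroot. Qed.

Lemma cofac_sg x A : A != 0 -> Num.sg (cofac x A).[x] = sgp_right A x.
Proof.
move=> nA; case: (mu_dec x nA) => q nq eA.
rewrite /cofac /mult -mu_mup // {1}eA mulpK ?expf_neq0 ?polyXsubC_eq0 //.
by rewrite (sgp_right_dec nq eA).
Qed.

Lemma sgp_right_pm x A : A != 0 -> sgp_right A x = (-1) ^+ (sgp_right A x < 0)%R.
Proof.
move=> nA; have := sgp_right_square x nA; rewrite -expr2 => /eqP.
rewrite sqrf_eq1 => /orP [] /eqP ->; rewrite ?ltr10 ?ltrN10 //; by rewrite ?oppr_lt0 ?ltr01 ?lt0r1 ?expr0 ?expr1.

Qed.

Definition sbR x A := (sgp_right A x < 0)%R.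

Lemma signr_lt0 (c : bool) : ((-1) ^+ c < 0 :> F)%R = c.
Proof. by case: c; rewrite ?expr1 ?expr0 ?oppr_lt0 ?ltr01 // ltr10. Qed.

Lemma sbR_M x A B : A != 0 -> B != 0 -> sbR x (A * B) = sbR x A (+) sbR x B.
Proof.
move=> nA nB; rewrite /sbR sgp_right_mul (sgp_right_pm x nA) (sgp_right_pm x nB).
by rewrite -signr_addb signr_lt0 !signr_lt0.
Qed.

Lemma sgp_rightN x A : sgp_right (- A) x = - sgp_right A x.
Proof. by rewrite -scaleN1r sgp_right_scale sgrN1 mulN1r. Qed.

Lemma sbR_N x A : A != 0 -> sbR x (- A) = ~~ sbR x A.
Proof.
move=> nA; rewrite /sbR sgp_rightN; move: (sgp_right_pm x nA).
by case: (_ < 0)%R => ->; rewrite ?expr1 ?expr0 ?opprK ?ltr10 ?oppr_lt0 ?ltr01.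
Qed.

Lemma sbR_eq x A B : A != 0 -> B != 0 -> sbR x A = sbR x B ->
  sgp_right A x = sgp_right B x.
Proof. by move=> nA nB e; rewrite (sgp_right_pm x nA) (sgp_right_pm x nB) -/(sbR x A) e. Qed.

Lemma add1_R x A B : A != 0 -> B != 0 -> (\mu_x A < \mu_x B)%N ->
  [/\ A + B != 0, \mu_x (A+B) = \mu_x A & sbR x (A+B) = sbR x A].
Proof.
move=> nA nB h; split.
- apply/eqP => e; move: h; have -> : B = - A by apply/eqP; rewrite -addr_eq0 addrC e.
  by rewrite mu_opp ltnn.
- exact: mu_addr.
- by rewrite /sbR addrC sgp_right_addp0.
Qed.

Lemma sg_add_same (a b : F) : a != 0 -> Num.sg a = Num.sg b ->
  a + b != 0 /\ Num.sg (a + b) = Num.sg a.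
Proof.
case: (ltrgt0P a) => // ha _; case: (ltrgt0P b) => hb;
rewrite ?(gtr0_sg ha) ?(ltr0_sg ha) ?(gtr0_sg hb) ?(ltr0_sg hb) ?hb ?sgr0 => e;
try (exfalso; lra).
- have h : 0 < a + b by lra.
  by rewrite (gtr0_sg h) (gt_eqF h).
- have h : a + b < 0 by lra.
  by rewrite (ltr0_sg h) (lt_eqF h).
Qed.

Lemma add2_R x A B : A != 0 -> B != 0 -> \mu_x A = \mu_x B -> sbR x A = sbR x B ->
  [/\ A + B != 0, \mu_x (A+B) = \mu_x A & sbR x (A+B) = sbR x A].
Proof.
move=> nA nB hm hs; have := sbR_eq nA nB hs.
case: (mu_dec x nA) => qA nqA eA; case: (mu_dec x nB) => qB nqB eB.
rewrite (sgp_right_dec nqA eA) (sgp_right_dec nqB eB) => e.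
have nqA0 : qA.[x] != 0 by [].
have [ns es] := sg_add_same nqA0 e.
have eAB : A + B = (qA + qB) * ('X - x%:P) ^+ (\mu_x A) by rewrite mulrDl {1}eA {1}eB hm.
have nr : ~~ root (qA + qB) x by rewrite /root hornerD.
have nq : qA + qB != 0 by apply: contraNneq nr => ->; rewrite root0.
have nX : ('X - x%:P) ^+ (\mu_x A) != 0 by rewrite expf_neq0 ?polyXsubC_eq0.
split.
- by rewrite eAB mulf_neq0.
- by rewrite eAB mu_mul ?mulf_neq0 // (muNroot nr) mu_exp mu_XsubC ?muln1 ?mul1n.
- rewrite /sbR (sgp_right_dec nr eAB) hornerD es.
  by rewrite -(sgp_right_dec nqA eA).
Qed.

Lemma add0_R x A B : A != 0 -> B != 0 -> A + B != 0 ->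
  (minn (\mu_x A) (\mu_x B) <= \mu_x (A+B))%N.
Proof.
move=> nA nB nAB; rewrite !mu_mup // mup_geq //.
apply: dvdp_add; rewrite -mup_geq // ?geq_minl ?geq_minr //.
Qed.

Definition sbL x A := odd (\mu_x A) (+) sbR x A.
Definition mux x := fun A : {poly F} => \mu_x A.

Lemma muM_ x A B : A != 0 -> B != 0 -> mux x (A * B) = (mux x A + mux x B)%N.
Proof. by move=> nA nB; rewrite /mux mu_mul // mulf_neq0. Qed.

Lemma muN_ x A : mux x (- A) = mux x A.
Proof. exact: mu_opp. Qed.

Lemma sbL_M x A B : A != 0 -> B != 0 -> sbL x (A * B) = sbL x A (+) sbL x B.
Proof.
move=> nA nB; rewrite /sbL sbR_M // mu_mul ?mulf_neq0 // oddD.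
by case: odd; case: odd; case: sbR; case: sbR.
Qed.

Lemma sbL_N x A : A != 0 -> sbL x (- A) = ~~ sbL x A.
Proof. by move=> nA; rewrite /sbL sbR_N // mu_opp addbN. Qed.

Lemma add1_L x A B : A != 0 -> B != 0 -> (mux x A < mux x B)%N ->
  [/\ A + B != 0, mux x (A+B) = mux x A & sbL x (A+B) = sbL x A].
Proof.
move=> nA nB h; case: (add1_R nA nB h) => n1 e1 e2; split => //.
by rewrite /sbL e2; congr (odd _ (+) _); exact: e1.
Qed.

Lemma add2_L x A B : A != 0 -> B != 0 -> mux x A = mux x B -> sbL x A = sbL x B ->
  [/\ A + B != 0, mux x (A+B) = mux x A & sbL x (A+B) = sbL x A].
Proof.
move=> nA nB hm hsL.
have hs : sbR x A = sbR x B.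
  by move: hsL; rewrite /sbL -/(mux x A) -/(mux x B) hm => /addbI.
case: (add2_R nA nB hm hs) => n1 e1 e2; split => //.
by rewrite /sbL e2; congr (odd _ (+) _); exact: e1.
Qed.

Lemma add1_R' x A B : A != 0 -> B != 0 -> (mux x A < mux x B)%N ->
  [/\ A + B != 0, mux x (A+B) = mux x A & sbR x (A+B) = sbR x A].
Proof. exact: add1_R. Qed.
Lemma add2_R' x A B : A != 0 -> B != 0 -> mux x A = mux x B -> sbR x A = sbR x B ->
  [/\ A + B != 0, mux x (A+B) = mux x A & sbR x (A+B) = sbR x A].
Proof. exact: add2_R. Qed.
Lemma add0_' x A B : A != 0 -> B != 0 -> A + B != 0 ->
  (minn (mux x A) (mux x B) <= mux x (A+B))%N.
Proof. exact: add0_R. Qed.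

Definition localR x := local (muM_ x) (@sbR_M x) (muN_ x) (@sbR_N x)
  (@add1_R' x) (@add2_R' x) (@add0_' x).
Definition localL x := local (muM_ x) (@sbL_M x) (muN_ x) (@sbL_N x)
  (@add1_L x) (@add2_L x) (@add0_' x).

Lemma sgnE (c : bool) : (sgn c)%:~R = (-1) ^+ c :> F.
Proof. by case: c; rewrite /sgn ?expr1 ?expr0 //= ?mulrNz. Qed.

Lemma sgn_pm x A : A != 0 -> sgp_right A x = (sgn (sbR x A))%:~R.
Proof. by move=> nA; rewrite sgnE /sbR -sgp_right_pm. Qed.

Lemma sgnD (a b : bool) : (sgn (a (+) b))%:~R = (sgn a)%:~R * (sgn b)%:~R :> F.
Proof. by rewrite !sgnE signr_addb. Qed.

Lemma mult_mu x A : A != 0 -> mult x A = \mu_x A.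
Proof. by move=> nA; rewrite /mult mu_mup. Qed.

Lemma cofac_prod x A B : A != 0 -> B != 0 ->
  Num.sg ((cofac x A).[x] * (cofac x B).[x]) = (sgn (sbR x A (+) sbR x B))%:~R.
Proof. by move=> nA nB; rewrite sgrM !cofac_sg // sgnD -!sgn_pm. Qed.

Lemma Indp_Ia x A B : Indp x A B = 2^-1 * (Ia (mux x) (sbR x) A B)%:~R.
Proof.
rewrite /Indp /Ia /val_neg /Defs.val.
have [->|nA] := eqVneq A 0; first by rewrite /= mulr0.
have [->|nB] := eqVneq B 0; first by rewrite /= mulr0.
rewrite /= !mult_mu // subr_lt0 ltz_nat /mux.
by case: ifP => _; rewrite ?mulr0 // cofac_prod.
Qed.

Lemma Indm_Ia x A B : Indm x A B = 2^-1 * (Ia (mux x) (sbL x) A B)%:~R.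
Proof.
rewrite /Indm /Ia /val_neg /Defs.val.
have [->|nA] := eqVneq A 0; first by rewrite /= mulr0.
have [->|nB] := eqVneq B 0; first by rewrite /= mulr0.
rewrite /= !mult_mu // subr_lt0 ltz_nat /mux.
case: ifP => h; rewrite ?mulr0 // cofac_prod // -mulrA; congr (_ * _).
have hle : (\mu_x A <= \mu_x B)%N := ltnW h.
rewrite expN1r distnEr //.
rewrite -(signr_odd _ (\mu_x B - \mu_x A)) oddB // -sgnE -sgnD /sbL.
congr (sgn _)%:~R.
by case: odd; case: odd; case: sbR; case: sbR.
Qed.

Lemma Sign_Sa x A B : Sign A B x = (Sa (mux x) (sbR x) A B)%:~R.
Proof.
rewrite /Sign /Sa /Defs.val.
have [->|nA] := eqVneq A 0; first by [].
have [->|nB] := eqVneq B 0; first by [].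
rewrite /= !mult_mu // /mux.
have -> : (Some ((\mu_x A)%:Z - (\mu_x B)%:Z) == Some 0) = (\mu_x A == \mu_x B).
  apply/eqP/eqP => [[] /eqP|->]; last by rewrite subrr.
  by rewrite subr_eq0 => /eqP [].
by case: ifP => _ //; rewrite cofac_prod.
Qed.

Lemma Sa_LR x A B : Sa (mux x) (sbL x) A B = Sa (mux x) (sbR x) A B.
Proof.
rewrite /Sa; case: ifP => // /and3P [_ _ /eqP h].
by rewrite /sbL -/(mux x A) -/(mux x B) h; case: odd; case: sbR; case: sbR.
Qed.

Definition TR x N D := 2^-1 * sgp_right (N * D) x.
Definition TL x N D := 2^-1 * ((-1) ^+ (\mu_x (N * D)) * sgp_right (N * D) x).

Lemma Ta_R x N D : 2^-1 * (Ta (sbR x) N D)%:~R = TR x N D.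
Proof.
rewrite /Ta /TR.
have [->|nN] := eqVneq N 0; first by rewrite /= ?mul0r ?mulr0 ?sgp_right0 ?mulr0.
have [->|nD] := eqVneq D 0; first by rewrite /= ?mul0r ?mulr0 ?sgp_right0 ?mulr0.
by rewrite /= sgp_right_mul sgnD -!sgn_pm.
Qed.

Lemma Ta_L x N D : 2^-1 * (Ta (sbL x) N D)%:~R = TL x N D.
Proof.
rewrite /Ta /TL.
have [->|nN] := eqVneq N 0; first by rewrite /= ?mul0r ?mulr0 ?sgp_right0 ?mulr0.
have [->|nD] := eqVneq D 0; first by rewrite /= ?mul0r ?mulr0 ?sgp_right0 ?mulr0.
have nND : N * D != 0 by rewrite mulf_neq0.
rewrite /= -(signr_odd _ (\mu_x (N * D))) -sgnE (sgn_pm x nND) -sgnD.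
by rewrite -/(sbL x (N * D)) sbL_M.
Qed.

Lemma locR x P Q R S : ~~ ((P == 0) && (Q == 0)) -> ~~ ((R == 0) && (S == 0)) ->
  Indp x (P * R - Q * S) (P * S + Q * R) =
  Indp x P Q + Indp x R S - TR x (P * S + Q * R) (Q * S) +
  (if badA (mux x) P Q R S then 0 else 2^-1 * Sign (P * S + Q * R) (Q * S) x).
Proof.
move=> hPQ hRS; rewrite !Indp_Ia Sign_Sa -Ta_R (localR x hPQ hRS).
by case: ifP => _; rewrite !(intrD, intrB) /=; ring.
Qed.

Lemma locL x P Q R S : ~~ ((P == 0) && (Q == 0)) -> ~~ ((R == 0) && (S == 0)) ->
  Indm x (P * R - Q * S) (P * S + Q * R) =
  Indm x P Q + Indm x R S - TL x (P * S + Q * R) (Q * S) +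
  (if badA (mux x) P Q R S then 0 else 2^-1 * Sign (P * S + Q * R) (Q * S) x).
Proof.
move=> hPQ hRS; rewrite !Indm_Ia Sign_Sa -Sa_LR -Ta_L (localL x hPQ hRS).
by case: ifP => _; rewrite !(intrD, intrB) /=; ring.
Qed.

Lemma badA_bad x P Q R S : badA (mux x) P Q R S -> bad x P Q R S.
Proof.
rewrite /badA /mux => /and5P [/and4P [nP nQ nR nS] hlt /eqP he nN /eqP hN].
split => //; split => //; split.
  exists ((\mu_x P)%:Z - (\mu_x Q)%:Z); split.
  - by rewrite /Defs.val (negPf nP) !mult_mu.
  - rewrite /Defs.val (negPf nR) !mult_mu //; congr Some; lia.
  - by rewrite subr_lt0 ltz_nat.
rewrite /Defs.val (negPf nN) !mult_mu ?mulf_neq0 // hN mu_mul ?mulf_neq0 //.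
by rewrite subrr.
Qed.

Definition sr (U : {poly F}) (y : F) := sgp_right U y.
Definition sl (U : {poly F}) (y : F) := (-1) ^+ (\mu_y U) * sgp_right U y.

Lemma tele_base U a b : U != 0 -> a < b -> roots U a b = [::] -> sl U b = sr U a.
Proof.
move=> nU hab h0.
have hy : (a + b) / 2 \in `]a, b[ := @mid_in_itv _ false true a b hab.
have e1 : Num.sg U.[(a + b) / 2] = sgp_right U a.
  apply: (@sgr_neighpr _ b); rewrite /neighpr /next_root (negPf nU) h0 /=.
  by rewrite max_l ?ltW.
have e2 := @sgr_neighpl _ a U b ((a + b) / 2).
rewrite /neighpl /prev_root (negPf nU) h0 /= min_l ?ltW // in e2.
by rewrite /sl /sr -e1 (e2 hy) signr_odd.
Qed.

Lemma tele U a b : U != 0 -> a < b ->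
  \sum_(y <- roots U a b) (sr U y - sl U y) = sl U b - sr U a.
Proof.
move=> nU; move eq: (roots U a b) => s; elim: s a eq => [|y s IH] a eq hab.
  by rewrite big_nil (tele_base nU hab eq) subrr.
move/eqP: eq; rewrite roots_cons => /and5P [_ hy /eqP h0 _ /eqP hs].
have hay : a < y by rewrite (itvP hy).
have hyb : y < b by rewrite (itvP hy).
rewrite big_cons (IH y hs hyb) (tele_base nU hay h0).
ring.
Qed.

Lemma big_sub (f : F -> F) (s1 s2 : seq F) : uniq s1 -> uniq s2 ->
  {subset s1 <= s2} -> (forall y, y \in s2 -> y \notin s1 -> f y = 0) ->
  \sum_(y <- s1) f y = \sum_(y <- s2) f y.
Proof.
move=> u1 u2 sub h0.
rewrite [RHS](bigID (fun y => y \in s1)) /= [X in _ = _ + X]big1_seq ?addr0; last first.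
  by move=> y /andP [hn hy]; apply: h0.
have hp : perm_eq s1 [seq y <- s2 | y \in s1].
  apply: uniq_perm => //; first by rewrite filter_uniq.
  by move=> y; rewrite mem_filter; case: (boolP (y \in s1)) => // /sub ->.
by rewrite -[in RHS]big_filter (perm_big _ hp).
Qed.

Lemma Indx_out a b y A B : y \notin roots B a b -> y \in `]a, b[ -> Indx y A B = 0.
Proof.
move=> hn hy; rewrite /Indx Indp_Ia Indm_Ia /Ia.
have [->|nB] := eqVneq B 0; first by rewrite ?eqxx /= ?andbF subrr.
have nr : ~~ root B y by move: hn; rewrite in_roots hy nB !andbT.
by rewrite /mux (muNroot nr) ltn0 !andbF subrr.
Qed.

Definition nz (A : {poly F}) := if A == 0 then 1 else A.

Lemma nz_neq0 A : nz A != 0.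
Proof. by rewrite /nz; case: ifP => [_|/negbT //]; exact: oner_neq0. Qed.

Lemma roots_sub a b B W : B %| W -> W != 0 -> {subset roots B a b <= roots W a b}.
Proof.
move=> dv nW y; rewrite !in_roots => /and3P [hr hy nB].
rewrite hy nW andbT /=; move: hr; rewrite -!dvdp_XsubCl => h; rewrite andbT; exact: dvdp_trans h dv.
Qed.

End Conc.

Unset Implicit Arguments.

Theorem proposition2p3 (F : rcfType) (P Q R S : {poly F}) (a b : F) :
  ~~ ((P == 0) && (Q == 0)) -> ~~ ((R == 0) && (S == 0)) -> a < b ->
  ~ bad a P Q R S -> ~ bad b P Q R S ->
  IndI a b (P * R - Q * S) (P * S + Q * R)
  = IndI a b P Q + IndI a b R S - Var a b (P * S + Q * R) (Q * S).
Proof.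
move=> hPQ hRS hab nba nbb.
set N := P * S + Q * R; set M := P * R - Q * S; set D := Q * S.
set W := nz N * nz Q * nz S.
have nW : W != 0 by rewrite !mulf_neq0 ?nz_neq0.
have dvN : nz N %| W by rewrite /W -mulrA dvdp_mulIl.
have dvQ : nz Q %| W by rewrite /W mulrAC dvdp_mulIr.
have dvS : nz S %| W by rewrite /W dvdp_mulIr.
have subr B : nz B %| W -> {subset roots B a b <= roots W a b}.
  move=> dv; rewrite /nz in dv; case: eqP dv => [->|_ dv]; first by rewrite roots0.
  exact: roots_sub.
have reidx A B : nz B %| W ->
    \sum_(y <- roots B a b) Indx y A B = \sum_(y <- roots W a b) Indx y A B.
  move=> dv; apply: big_sub; rewrite ?uniq_roots //; first exact: subr.
  by move=> y hy hn /=; exact: (Indx_out A hn (roots_in hy)).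
have Ex y : Indx y M N = Indx y P Q + Indx y R S - (TR y N D - TL y N D).
  by rewrite /Indx (locR y hPQ hRS) (locL y hPQ hRS); ring.
have bA : badA (mux a) P Q R S = false.
  by apply/negP => h; exact: nba (badA_bad h).
have bB : badA (mux b) P Q R S = false.
  by apply/negP => h; exact: nbb (badA_bad h).
have Ea := locR a hPQ hRS; rewrite bA -/N -/M -/D in Ea.
have Eb := locL b hPQ hRS; rewrite bB -/N -/M -/D in Eb.
have EJ : \sum_(y <- roots W a b) (TR y N D - TL y N D) = TL b N D - TR a N D.
  have [eU|nU] := eqVneq (N * D) 0.
    rewrite /TR /TL eU big1 => [|y _]; by rewrite ?sgp_right0 ?mulr0 ?subrr.
  have nN : N != 0 by apply: contraNneq nU => ->; rewrite mul0r.
  have nD : D != 0 by apply: contraNneq nU => ->; rewrite mulr0.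
  have nQ : Q != 0 by apply: contraNneq nD; rewrite /D => ->; rewrite mul0r.
  have nS : S != 0 by apply: contraNneq nD; rewrite /D => ->; rewrite mulr0.
  have eW : W = N * D by rewrite /W /nz (negPf nN) (negPf nQ) (negPf nS) /D mulrA.
  rewrite eW /TR /TL.
  under eq_bigr do rewrite -mulrBr.
  rewrite -big_distrr /= -mulrBr; congr (_ * _).
  exact: (tele nU hab).
rewrite /IndI /Var (reidx _ _ dvN) (reidx _ _ dvQ) (reidx _ _ dvS).
under eq_bigr do rewrite Ex.
rewrite big_split /= sumrN big_split /= EJ Ea Eb.
ring.
Qed.
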